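(* Let $k\ge2$ and $n\le0$, and write $q=q_{n,k}$, $r=r_{n,k}$. (a) If $r=0$ and $q\ge2$ (equivalently $|n|\ge2k-1$), then the coefficient of $x^{|n|+1-2k}$ in $\mathcal{F}_{n,k}(x)$ is $2q-3$ when $k=2$ and $q-1$ when $k\ge3$. (b) If $1\le r\le k-1$ and $q\ge r+1$ (equivalently $|n|\ge k(r+1)-1$), then the coefficient of $x^{|n|+1-k(r+1)}$ in $\mathcal{F}_{n,k}(x)$ is $(-1)^r(r+1)\binom{q-1}{r}$. In both cases the exponent in question is the degree of $\mathcal{F}_{n,k}$ minus $k$. No monomial of $\mathcal{F}_{n,k}$ has exponent strictly between this exponent and the degree.
   Context: For $k\ge2$, the polynomials $\mathcal{F}_{n,k}(x)\in\mathbb{Z}[x]$ ($n\in\mathbb{Z}$) are defined by $\mathcal{F}_{1,k}=1$, $\mathcal{F}_{n,k}=0$ for $n=0,-1,\dots,-(k-2)$, and $\mathcal{F}_{n,k}(x)=\sum_{j=1}^{k}x^{k-j}\mathcal{F}_{n-j,k}(x)$ for all $n\in\mathbb{Z}$. This recurrence is used upwards for $n\ge2$, and downwards for $n\le-(k-1)$ as $\mathcal{F}_{n,k}=\mathcal{F}_{n+k,k}-\sum_{j=1}^{k-1}x^j\mathcal{F}_{n+j,k}$. For $n\le0$, set $q_{n,k}=\lfloor(|n|+1)/k\rfloor$ and let $r_{n,k}\in\{0,\dots,k-1\}$ be the residue of $|n|+1$ modulo $k$. Then $|n|+1=kq_{n,k}+r_{n,k}$. *)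

(* Defs.v *)
From mathcomp Require Import all_boot all_order all_algebra.
Set Implicit Arguments. Unset Strict Implicit. Unset Printing Implicit Defensive.
Import GRing.Theory Num.Theory.
Local Open Scope ring_scope.

(* Hneg_list k m = [:: H m; H (m-1); ...; H 0]
   where H m := F_{1-m,k}.  H 0 = F_1 = 1, H m = 0 for 1 <= m <= k-1,
   and for m >= k the downward recurrence
   F_n = F_{n+k} - sum_{j=1}^{k-1} x^j F_{n+j}  (n = 1-m). *)
Fixpoint Hneg_list (k : nat) (m : nat) : seq {poly int} :=
  match m with
  | 0 => [:: 1]
  | m'.+1 =>
      let s := Hneg_list k m' in
      (if (m'.+1 < k)%N then 0
       else s`_(k.-1) - \sum_(1 <= j < k) 'X^j * s`_(j.-1)) :: s
  end.

(* Fpos_list k m = [:: F_{m+1}; ...; F_1];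
   F_{n} = sum_{j=1}^k x^{k-j} F_{n-j} for n >= 2, with F_{n-j} = 0 when
   n - j <= 0 (then 2-k <= n-j <= 0), realized by the default 0 of nth. *)
Fixpoint Fpos_list (k : nat) (m : nat) : seq {poly int} :=
  match m with
  | 0 => [:: 1]
  | m'.+1 =>
      let s := Fpos_list k m' in
      (\sum_(1 <= j < k.+1) 'X^(k - j) * s`_(j.-1)) :: s
  end.

Definition Fcal (n : int) (k : nat) : {poly int} :=
  match n with
  | Posz m.+1 => head 0 (Fpos_list k m)
  | _ => head 0 (Hneg_list k (`|n|%N.+1))
  end.

Definition qnk (n : int) (k : nat) : nat := ((`|n|%N).+1 %/ k)%N.
Definition rnk (n : int) (k : nat) : nat := ((`|n|%N).+1 %% k)%N.

(* Main.v *)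
Require Import Defs.
From mathcomp Require Import all_boot all_order all_algebra.
From mathcomp Require Import zify ring.
Import GRing.Theory Num.Theory.
Local Open Scope ring_scope.



Definition H (k m : nat) : {poly int} := head 0 (Hneg_list k m).
Definition C (k : nat) (m j : int) : int :=
  if (0 <= m) && (0 <= j) then (H k (`|m|%N + k))`_(`|j|%N) else 0.

Lemma Hneg_nth k m i : (i <= m)%N -> (Hneg_list k m)`_i = H k (m - i).
Proof.
elim: m i => [|m IH] [|i] hi //.
by rewrite /= IH // subSS.
Qed.

Lemma H_small k m : (0 < m < k)%N -> H k m = 0.
Proof. case: m => [|m] //= hm; by rewrite /H /= hm. Qed.

Lemma H_rec k m : (k <= m)%N -> (0 < k)%N ->
  H k m = H k (m - k) - \sum_(1 <= j < k) 'X^j * H k (m - j).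
Proof.
case: m => [|m] hkm hk; first by move: hkm; rewrite leqn0 => /eqP Hk; rewrite Hk in hk.
rewrite /H /= ltnNge hkm /=.
rewrite Hneg_nth; last by lia.
have -> : (m - k.-1 = m.+1 - k)%N by lia.
congr (_ - _); apply: eq_big_nat => j hj.
rewrite Hneg_nth; last by lia.
by have -> : (m - j.-1 = m.+1 - j)%N by lia.
Qed.

Lemma HcoefC k t j : (0 < k)%N ->
  (H k t)`_j = ((t == 0%N) && (j == 0%N))%:Z + C k (t%:Z - k%:Z) j%:Z.
Proof.
move=> hk; rewrite /C.
case: (ltnP t k) => h.
- have -> : (0 <= t%:Z - k%:Z) = false by lia.
  rewrite /= addr0.
  case: t h => [|t] h.
  + rewrite /H /= coef1 /=. by case: j.
  + by rewrite H_small ?coef0 //; lia.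
- have -> : (0 <= t%:Z - k%:Z) = true by lia.
  have -> : (t == 0%N) = false by lia.
  have -> : (`|t%:Z - k%:Z|%N + k = t)%N by lia.
  by rewrite /= add0r.
Qed.



Lemma C_neg k m j : (m < 0) || (j < 0) -> C k m j = 0.
Proof. rewrite /C => h. have -> : (0 <= m) && (0 <= j) = false by lia. by []. Qed.

Lemma Crec k m j : (0 < k)%N ->
  \sum_(0 <= i < k) C k (m - i%:Z) (j - i%:Z) =
  ((m == 0) && (j == 0))%:Z + C k (m - k%:Z) j.
Proof.
move=> hk.
case: (boolP ((m < 0) || (j < 0))) => hn.
- rewrite big1_seq; last first.
    move=> i _; apply: C_neg; lia.
  rewrite C_neg; last by lia.
  have -> : (m == 0) && (j == 0) = false by lia.
  by rewrite addr0.
- have [a ->] : exists a : nat, m = a%:Z by exists `|m|%N; lia.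
  have [b ->] : exists b : nat, j = b%:Z by exists `|j|%N; lia.
  have E : C k a b = (H k (a + k))`_b by rewrite /C /=.
  move: E; rewrite H_rec ?leq_addl //.
  rewrite coefB coef_sum HcoefC // addnK => E.
  rewrite big_ltn // !subr0 E.
  have -> : \sum_(1 <= i < k) C k (a%:Z - i%:Z) (b%:Z - i%:Z) =
    \sum_(1 <= i < k) ('X^i * H k (a + k - i))`_b.
    apply: eq_big_nat => i hi.
    rewrite coefXnM HcoefC //.
    case: ifP => hbi.
    + by rewrite C_neg //; lia.
    + have -> : ((a + k - i == 0)%N && (b - i == 0)%N) = false by lia.
      rewrite add0r; congr C; lia.
  have -> : ((a == 0%N) && (b == 0%N)) = ((a%:Z == 0) && (b%:Z == 0)) by lia.
  by rewrite subrK.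
Qed.



Lemma Cdiff k m j : (0 < k)%N ->
  C k m j - C k (m - k%:Z) (j - k%:Z) =
  ((m == 0) && (j == 0))%:Z - ((m - 1 == 0) && (j - 1 == 0))%:Z
  + C k (m - k%:Z) j - C k (m - 1 - k%:Z) (j - 1).
Proof.
move=> hk.
have h1 := Crec k m j hk.
have h2 := Crec k (m - 1) (j - 1) hk.
pose f i := C k (m - i%:Z) (j - i%:Z).
have T := telescope_sumr f (leq0n k).
rewrite sumrB in T.
have E2 : \sum_(0 <= i < k) f i.+1 = \sum_(0 <= i < k) C k (m - 1 - i%:Z) (j - 1 - i%:Z).
  apply: eq_bigr => i _; rewrite /f; congr C; lia.
have E1 : \sum_(0 <= i < k) f i = \sum_(0 <= i < k) C k (m - i%:Z) (j - i%:Z) by [].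
have F0 : f 0%N = C k m j by rewrite /f !subr0.
have Fk : f k = C k (m - k%:Z) (j - k%:Z) by [].
rewrite E2 E1 h1 h2 F0 Fk in T.
move: T.
move: ((m == 0) && (j == 0)) ((m - 1 == 0) && (j - 1 == 0)) (C k m j) (C k (m - k%:Z) (j - k%:Z)) (C k (m - k%:Z) j) (C k (m - 1 - k%:Z) (j - 1)) => b1 b2 x1 x2 x3 x4.
lia.
Qed.

Lemma Csupp k m j : (0 < k)%N -> C k m j != 0 ->
  (0 <= j) /\ exists s : nat, m = j + k%:Z * s%:Z.
Proof.
move=> hk.
have [n] : exists n : nat, m < n%:Z by exists `|m|.+1%N; lia.
elim: n m j => [|n IH] m j hm hC.
  by move: hC; rewrite C_neg ?eqxx //; lia.
have hj : 0 <= j.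
  by move: hC; rewrite /C; case: ifP => // /andP[].
split => //.
have := Cdiff k m j hk.
move/(canRL (subrK _)).
move=> E; move: hC; rewrite E.
case: (boolP (C k (m - k%:Z) (j - k%:Z) == 0)) => [/eqP h1|h1]; last first.
  have [_ [s hs]] := IH (m - k%:Z) (j - k%:Z) ltac:(lia) h1.
  move=> _; exists s; clear E; lia.
case: (boolP (C k (m - k%:Z) j == 0)) => [/eqP h2|h2]; last first.
  have [_ [s hs]] := IH (m - k%:Z) j ltac:(lia) h2.
  move=> _; exists s.+1; rewrite -addn1 PoszD mulrDr mulr1; clear E; lia.
case: (boolP (C k (m - 1 - k%:Z) (j - 1) == 0)) => [/eqP h3|h3]; last first.
  have [_ [s hs]] := IH (m - 1 - k%:Z) (j - 1) ltac:(lia) h3.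
  move=> _; exists s.+1; rewrite -addn1 PoszD mulrDr mulr1; clear E; lia.
rewrite h1 h2 h3 => hne.
exists 0%N.
case: (boolP ((m == 0) && (j == 0))) => [hh|hh]; first by lia.
case: (boolP ((m - 1 == 0) && (j - 1 == 0))) => [hh'|hh']; first by lia.
by move: hne; rewrite (negbTE hh) (negbTE hh').
Qed.



Definition g k (s : nat) (j : int) := C k (j + k%:Z * s%:Z) j.

Lemma kS k i : k%:Z * i.+1%:Z = k%:Z * i%:Z + k%:Z.
Proof. by rewrite -addn1 PoszD mulrDr mulr1. Qed.

Lemma kge0 k i : 0 <= k%:Z * i%:Z.
Proof. by rewrite -PoszM. Qed.

Lemma gneg k s j : j < 0 -> g k s j = 0.
Proof. by move=> h; rewrite /g C_neg //; lia. Qed.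

Lemma C_lt k m j : (0 < k)%N -> m < j -> C k m j = 0.
Proof.
move=> hk h; apply/eqP; apply: contraT => hC.
have [_ [s hs]] := Csupp k m j hk hC.
have := kge0 k s; lia.
Qed.

Lemma gS k s j : (0 < k)%N ->
  g k s.+1 j = g k s.+1 (j - k%:Z) + g k s j - g k s (j - 1).
Proof.
move=> hk; rewrite /g.
have D := Cdiff k (j + k%:Z * s.+1%:Z) j hk.
have hks := kge0 k s.
rewrite kS in D *.
rewrite (_ : (j + (k%:Z * s%:Z + k%:Z) - k%:Z) = j + k%:Z * s%:Z) in D; last by lia.
rewrite (_ : (j + (k%:Z * s%:Z + k%:Z) - 1 - k%:Z) = j - 1 + k%:Z * s%:Z) in D; last by lia.
rewrite (_ : ((j + (k%:Z * s%:Z + k%:Z) == 0) && (j == 0)) = false) in D; last by lia.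
rewrite (_ : ((j + (k%:Z * s%:Z + k%:Z) - 1 == 0) && (j - 1 == 0)) = false) in D; last by lia.
have -> : j - k%:Z + (k%:Z * s%:Z + k%:Z) = j + k%:Z * s%:Z by lia.
move: D.
move: (C k (j + (k%:Z * s%:Z + k%:Z)) j) (C k (j + k%:Z * s%:Z) (j - k%:Z))
  (C k (j + k%:Z * s%:Z) j) (C k (j - 1 + k%:Z * s%:Z) (j - 1)) => a b c d.
lia.
Qed.

Lemma g0 k j : (0 < k)%N ->
  g k 0 j = g k 0 (j - k%:Z) + (j == 0)%:Z - (j == 1)%:Z.
Proof.
move=> hk; rewrite /g !mulr0 !addr0.
have D := Cdiff k j j hk.
rewrite (@C_lt k (j - k%:Z) j hk) in D; last by lia.
rewrite (@C_lt k (j - 1 - k%:Z) (j - 1) hk) in D; last by lia.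
rewrite (_ : ((j == 0) && (j == 0)) = (j == 0)) in D; last by lia.
rewrite (_ : ((j - 1 == 0) && (j - 1 == 0)) = (j == 1)) in D; last by lia.
move: D; move: (C k j j) (C k (j - k%:Z) (j - k%:Z)) (j == 0) (j == 1) => a b c d.
lia.
Qed.



Lemma Lzero k s rho i : (0 < k)%N -> (s.+1 < rho)%N -> (rho < k)%N ->
  g k s (k%:Z * i%:Z + rho%:Z) = 0.
Proof.
move=> hk; elim: s rho i => [|s IHs] rho i h1 h2.
- elim: i => [|i IHi].
  + rewrite g0 // gneg; last by lia.
    rewrite (_ : (k%:Z * 0%:Z + rho%:Z == 0) = false); last by lia.
    rewrite (_ : (k%:Z * 0%:Z + rho%:Z == 1) = false); last by lia.
    by [].
  + have hki := kge0 k i.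
    rewrite g0 // kS.
    rewrite (_ : k%:Z * i%:Z + k%:Z + rho%:Z - k%:Z = k%:Z * i%:Z + rho%:Z); last by lia.
    rewrite IHi.
    rewrite (_ : (k%:Z * i%:Z + k%:Z + rho%:Z == 0) = false); last by lia.
    rewrite (_ : (k%:Z * i%:Z + k%:Z + rho%:Z == 1) = false); last by lia.
    by [].
- have hr1 : (s.+1 < rho.-1)%N by lia.
  have hr2 : (rho.-1 < k)%N by lia.
  elim: i => [|i IHi].
  + have hki := kge0 k 0.
    rewrite gS // gneg; last by lia.
    rewrite IHs; [|lia|lia].
    rewrite (_ : k%:Z * 0%:Z + rho%:Z - 1 = k%:Z * 0%:Z + (rho.-1)%:Z); last by lia.
    by rewrite IHs // subrr.
  + have hki := kge0 k i.
    rewrite gS // IHs; [|lia|lia].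
    rewrite kS.
    rewrite (_ : k%:Z * i%:Z + k%:Z + rho%:Z - k%:Z = k%:Z * i%:Z + rho%:Z); last by lia.
    rewrite IHi.
    rewrite (_ : k%:Z * i%:Z + k%:Z + rho%:Z - 1 = k%:Z * i.+1%:Z + (rho.-1)%:Z); last by rewrite kS; lia.
    by rewrite IHs // subrr.
Qed.



Lemma L1 k s i : (0 < k)%N -> (s.+1 < k)%N ->
  g k s (k%:Z * i%:Z + s.+1%:Z) = (-1) ^+ s.+1 * ('C(s + i, i))%:Z.
Proof.
move=> hk; elim: s i => [|s IHs] i hs.
- elim: i => [|i IHi].
  + rewrite g0 // gneg; last by lia.
    rewrite (_ : (k%:Z * 0%:Z + 1%:Z == 0) = false); last by lia.
    rewrite (_ : (k%:Z * 0%:Z + 1%:Z == 1) = true); last by lia.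
    by [].
  + have hki := kge0 k i.
    rewrite g0 // kS.
    rewrite (_ : k%:Z * i%:Z + k%:Z + 1%:Z - k%:Z = k%:Z * i%:Z + 1%:Z); last by lia.
    rewrite IHi.
    rewrite (_ : (k%:Z * i%:Z + k%:Z + 1%:Z == 0) = false); last by lia.
    rewrite (_ : (k%:Z * i%:Z + k%:Z + 1%:Z == 1) = false); last by lia.
    by rewrite !add0n !binn subr0 addr0.
- elim: i => [|i IHi].
  + have hki := kge0 k 0.
    rewrite gS // gneg; last by lia.
    rewrite Lzero; [|lia|lia|lia].
    rewrite (_ : k%:Z * 0%:Z + s.+2%:Z - 1 = k%:Z * 0%:Z + s.+1%:Z); last by lia.
    rewrite IHs; last by lia.
    rewrite !addn0 !bin0 !exprS; ring.
  + have hki := kge0 k i.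
    rewrite gS // Lzero; [|lia|lia|lia].
    rewrite kS.
    rewrite (_ : k%:Z * i%:Z + k%:Z + s.+2%:Z - k%:Z = k%:Z * i%:Z + s.+2%:Z); last by lia.
    rewrite IHi.
    rewrite (_ : k%:Z * i%:Z + k%:Z + s.+2%:Z - 1 = k%:Z * i.+1%:Z + s.+1%:Z); last by rewrite kS; lia.
    rewrite IHs; last by lia.
    rewrite (_ : (s.+1 + i.+1 = (s + i).+2)%N); last by lia.
    rewrite (_ : (s.+1 + i = (s + i).+1)%N); last by lia.
    rewrite (_ : (s + i.+1 = (s + i).+1)%N); last by lia.
    rewrite [X in _ = _ * X%:Z]binS PoszD !exprS; ring.
Qed.

Lemma L2 k s i : (1 < k)%N -> (s < k)%N ->
  g k s (k%:Z * i%:Z + s%:Z) = (-1) ^+ s * (s.+1)%:Z * ('C(s + i, s))%:Z.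
Proof.
move=> hk; have hk0 : (0 < k)%N by lia.
elim: s i => [|s IHs] i hs.
- elim: i => [|i IHi].
  + rewrite g0 // gneg; last by lia.
    rewrite (_ : (k%:Z * 0%:Z + 0%:Z == 0) = true); last by lia.
    rewrite (_ : (k%:Z * 0%:Z + 0%:Z == 1) = false); last by lia.
    by [].
  + have hki := kge0 k i.
    rewrite g0 // kS.
    rewrite (_ : k%:Z * i%:Z + k%:Z + 0%:Z - k%:Z = k%:Z * i%:Z + 0%:Z); last by lia.
    rewrite IHi.
    rewrite (_ : (k%:Z * i%:Z + k%:Z + 0%:Z == 0) = false); last by lia.
    rewrite (_ : (k%:Z * i%:Z + k%:Z + 0%:Z == 1) = false); last by lia.
    by rewrite !bin0 subr0 addr0.
- elim: i => [|i IHi].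
  + have hki := kge0 k 0.
    rewrite gS // gneg; last by lia.
    rewrite L1; [|lia|lia].
    rewrite (_ : k%:Z * 0%:Z + s.+1%:Z - 1 = k%:Z * 0%:Z + s%:Z); last by lia.
    rewrite IHs; last by lia.
    rewrite !addn0 !bin0 !binn exprS.
    have E : s.+2%:Z = s.+1%:Z + 1 by rewrite -addn1 PoszD.
    rewrite E.
    ring.
  + have hki := kge0 k i.
    rewrite gS // L1; [|lia|lia].
    rewrite kS.
    rewrite (_ : k%:Z * i%:Z + k%:Z + s.+1%:Z - k%:Z = k%:Z * i%:Z + s.+1%:Z); last by lia.
    rewrite IHi.
    rewrite (_ : k%:Z * i%:Z + k%:Z + s.+1%:Z - 1 = k%:Z * i.+1%:Z + s%:Z); last by rewrite kS; lia.
    rewrite IHs; last by lia.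
    rewrite (_ : (s.+1 + i.+1 = (s + i).+2)%N); last by lia.
    rewrite (_ : (s.+1 + i = (s + i).+1)%N); last by lia.
    rewrite (_ : (s + i.+1 = (s + i).+1)%N); last by lia.
    have Hsym : 'C((s + i).+1, i.+1) = 'C((s + i).+1, s).
      have h : ((s + i).+1 - i.+1 = s)%N by rewrite subSS addnK.
      rewrite -bin_sub; [by rewrite h | by rewrite ltnS leq_addl].
    rewrite Hsym [X in _ = _ * X%:Z]binS PoszD exprS.
    have E : s.+2%:Z = s.+1%:Z + 1 by rewrite -addn1 PoszD.
    rewrite E.
    ring.
Qed.

Lemma L3 k i : (1 < k)%N ->
  g k 1 (k%:Z * i%:Z) = (if k == 2%N then 2 * i%:Z + 1 else i%:Z + 1).
Proof.
move=> hk; have hk0 : (0 < k)%N by lia.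
elim: i => [|i IHi].
- have hki := kge0 k 0.
  rewrite gS // gneg; last by lia.
  rewrite (@gneg k 0 (k%:Z * 0%:Z - 1)); last by lia.
  rewrite (_ : k%:Z * 0%:Z = k%:Z * 0%:Z + 0%:Z); last by lia.
  rewrite L2 //.
  rewrite (_ : 'C(0 + 0, 0) = 1%N) // expr0 !mul1r subr0; case: ifP => _; lia.
- have hki := kge0 k i.
  rewrite gS // kS.
  rewrite (_ : k%:Z * i%:Z + k%:Z - k%:Z = k%:Z * i%:Z); last by lia.
  rewrite IHi.
  rewrite (_ : k%:Z * i%:Z + k%:Z = k%:Z * i.+1%:Z + 0%:Z); last by rewrite kS; lia.
  rewrite L2 //.
  rewrite (_ : k%:Z * i.+1%:Z + 0%:Z - 1 = k%:Z * i%:Z + (k.-1)%:Z); last by rewrite kS; lia.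
  case: eqP => hk2.
  + have -> : (k.-1 = 1)%N by lia.
    rewrite L1 //.
    rewrite !add0n binn /= bin0 expr0 expr1 !mulr1.
    lia.
  + rewrite Lzero //; [|lia|lia].
    rewrite /= add0n bin0 expr0 !mulr1 subr0.
    lia.
Qed.



Lemma sizeE (p : {poly int}) M : p`_M != 0 -> (forall j, (M < j)%N -> p`_j = 0) ->
  (size p).-1 = M.
Proof.
move=> h1 h2.
have le : (size p <= M.+1)%N by apply/leq_sizeP => j hj; apply: h2.
have lt : (M < size p)%N.
  rewrite ltnNge; apply/negP => /leq_sizeP h.
  by move: h1; rewrite h.
lia.
Qed.

Lemma FcalE n k : n <= 0 -> Fcal n k = H k (`|n|%N.+1).
Proof. by case: n => [[|m]|m]. Qed.

Lemma Fcoef n k j : (0 < k)%N -> n <= 0 ->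
  (Fcal n k)`_j = C k ((`|n|%N.+1)%:Z - k%:Z) j%:Z.
Proof. by move=> hk hn; rewrite FcalE // HcoefC // add0r. Qed.

Lemma between k m e t i : (0 < k)%N -> m = e%:Z + k%:Z * t%:Z -> (e < i < e + k)%N ->
  C k m i%:Z = 0.
Proof.
move=> hk hm hi; apply/eqP; apply: contraT => h.
have [_ [s hs]] := Csupp k m i%:Z hk h.
rewrite hm -!PoszM -!PoszD in hs; move/eqP: hs; rewrite eqz_nat => /eqP hs.
case: (leqP s t) => hst.
- have [d hd] : exists d, t = (s + d)%N by exists (t - s)%N; lia.
  rewrite hd mulnDr in hs.
  case: d hd hs => [|d] hd hs; first by lia.
  rewrite mulnS in hs; lia.
- have [d hd] : exists d, s = (t + d.+1)%N by exists (s - t.+1)%N; lia.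
  rewrite hd mulnDr mulnS in hs; lia.
Qed.

Lemma gC k s j m : m = j + k%:Z * s%:Z -> C k m j = g k s j.
Proof. by move=> ->. Qed.



Theorem mainTheorem11 (k : nat) (n : int) :
  (2 <= k)%N -> n <= 0 ->
  let N := `|n|%N in
  let q := qnk n k in
  let r := rnk n k in
  ((r = 0%N) -> (2 <= q)%N ->
     let e := (N.+1 - 2 * k)%N in
     (Fcal n k)`_e = (if k == 2%N then 2 * (q%:Z) - 3 else q%:Z - 1)
     /\ (size (Fcal n k)).-1 = (e + k)%N
     /\ (forall i : nat, (e < i < e + k)%N -> (Fcal n k)`_i = 0))
  /\
  ((1 <= r <= k.-1)%N -> (r.+1 <= q)%N ->
     let e := (N.+1 - k * r.+1)%N in
     (Fcal n k)`_e = (-1) ^+ r * (r.+1)%:Z * ('C(q.-1, r))%:Z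
     /\ (size (Fcal n k)).-1 = (e + k)%N
     /\ (forall i : nat, (e < i < e + k)%N -> (Fcal n k)`_i = 0)).
Proof.
move=> hk hn N q r.
have hk0 : (0 < k)%N by lia.
have hdiv : N.+1 = (q * k + r)%N by rewrite /q /r /qnk /rnk -divn_eq.
have hrk : (r < k)%N by rewrite /r /rnk ltn_pmod.
have FC : forall j, (Fcal n k)`_j = C k (N.+1%:Z - k%:Z) j%:Z.
  by move=> j; rewrite Fcoef.
clearbody N q r.
split.
- move=> hr0 hq2 e.
  have [Q hQ] : exists Q, q = (Q + 2)%N by exists (q - 2)%N; lia.
  subst q r.
  have he : e = (Q * k)%N by rewrite /e; lia.
  clearbody e; subst e.
  have hM : N.+1%:Z - k%:Z = (Q * k)%:Z + k%:Z by lia.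
  rewrite !FC hM.
  split; [|split].
  + rewrite (@gC k 1%N); last by rewrite mulr1.
    rewrite (_ : (Q * k)%:Z = k%:Z * Q%:Z); last by lia.
    rewrite L3 //.
    case: ifP => _; lia.
  + apply: sizeE.
    * rewrite FC hM (@gC k 0%N); last by lia.
      rewrite (_ : (Q * k + k)%N%:Z = k%:Z * Q.+1%:Z + 0%N%:Z); last by rewrite kS; lia.
      by rewrite L2 // expr0 bin0.
    * move=> j hj; rewrite FC; apply: C_lt => //; lia.
  + move=> i hi; rewrite FC; apply: (@between k _ _ 1%N _ hk0 _ hi); lia.
- move=> hr hq e.
  have [Q hQ] : exists Q, q = (Q + r.+1)%N by exists (q - r.+1)%N; lia.
  subst q.
  have he : e = (Q * k + r)%N by rewrite /e; lia.
  clearbody e; subst e.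
  have hM : N.+1%:Z - k%:Z = (Q * k + r)%N%:Z + k%:Z * r%:Z by lia.
  split; [|split].
  + rewrite FC (@gC k r _ _ hM).
    rewrite (_ : (Q * k + r)%N%:Z = k%:Z * Q%:Z + r%:Z); last by lia.
    rewrite L2 //.
    by rewrite (_ : ((Q + r.+1).-1 = r + Q)%N); last by lia.
  + have [R hR] : exists R, r = R.+1 by exists r.-1; lia.
    subst r.
    apply: sizeE.
    * rewrite FC (@gC k R); last first.
        rewrite hM -!PoszM -!PoszD; apply/eqP; rewrite eqz_nat; apply/eqP.
        rewrite mulnS; lia.
      rewrite (_ : (Q * k + R.+1 + k)%N%:Z = k%:Z * Q.+1%:Z + R.+1%:Z); last by rewrite kS; lia.
      rewrite L1 //.
      apply: mulf_neq0; first by rewrite signr_eq0.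
      have := @bin_gt0 (R + Q.+1) Q.+1; rewrite leq_addl; lia.
    * move=> j hj; rewrite FC hM.
      apply/eqP; apply: contraT => h.
      have [_ [s hs]] := Csupp _ _ _ hk0 h.
      move: hs; rewrite -!PoszM -!PoszD => /eqP; rewrite eqz_nat => /eqP hs.
      case: (leqP R s) => hRs.
      - have [d hd] : exists d, s = (R + d)%N by exists (s - R)%N; lia.
        rewrite hd mulnDr mulnS in hs; lia.
      - move: h; rewrite (@gC k s _ _ (_ : _ = j%:Z + k%:Z * s%:Z)); last first.
          rewrite -!PoszM -!PoszD hs //.
        have [i hi] : exists i, (Q + R.+1 = i + s)%N by exists (Q + R.+1 - s)%N; lia.
        have hj' : j%:Z = k%:Z * i%:Z + R.+1%:Z.
          have : (k * (Q + R.+1) = k * i + k * s)%N by rewrite hi mulnDr.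
          rewrite mulnDr mulnS => hh.
          rewrite -PoszM -PoszD; apply/eqP; rewrite eqz_nat; apply/eqP; lia.
        by rewrite hj' Lzero // ?eqxx //; lia.
  + move=> i hi; rewrite FC; exact: (@between k _ _ r _ hk0 hM hi).
Qed.
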